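(* Let $\delta$ be a deco polyomino of height $n$ which is a parallelogram polyomino, and let $\pi=\Phi_4^{-1}(\delta)\in S_n$. Then the number of cells in the first (leftmost) column of $\delta$ equals the length of the last ascending run of $\pi$.
   Context: Cells are unit squares $[i,i+1]\times[j,j+1]$ with integer $i,j$; a polyomino is a finite edge-connected set of cells, up to translation. A directed polyomino has a distinguished cell (the source) such that every cell can be reached from the source by a path of cells moving only North or East inside the polyomino. It is column-convex if each column is connected. The (directed) height is the number of distinct diagonal lines $x+y=\text{const}$ passing through centers of its cells. A deco polyomino is a directed column-convex polyomino whose height is attained only in its last (rightmost) column. Every deco polyomino of height $n$ is built uniquely by $n$ steps from the empty polyomino; at step $j$ one performs either an elevation (add a cell at the bottom of the leftmost column; step 1 is always an elevation) or a column pasting (add a new column of $k$ cells, $1\le k\le j-1$, to the left of the current polyomino so that the bottoms of the first two columns lie at the same level). The bijection $\Phi_4^{-1}$ from deco polyominoes of height $n$ to $S_n$ is defined recursively: the height-1 polyomino maps to the permutation $1$; if $\delta\in D_n$ arises from $\delta'\in D_{n-1}$ and $\Phi_4^{-1}(\delta')=\pi_1\cdots\pi_{n-1}$, then $\Phi_4^{-1}(\delta)=\pi_1\cdots\pi_{n-1}\,n$ if the last step is an elevation, and $\Phi_4^{-1}(\delta)=\pi_1\cdots\pi_{n-1-k}\,n\,\pi_{n-k}\cdots\pi_{n-1}$ if the last step pastes a column of length $k$ (so that exactly $k$ entries follow $n$). An ascending run of a permutation is a maximal increasing block of consecutive entries. A parallelogram polyomino is a polyomino bounded by two lattice paths with steps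 $(1,0)$ and $(0,1)$ which intersect only at their common origin and common endpoint. *)

(* Defs.v *)
From mathcomp Require Import all_boot all_order all_algebra.
Set Implicit Arguments. Unset Strict Implicit. Unset Printing Implicit Defensive.
Import Order.TTheory GRing.Theory Num.Theory.
Local Open Scope ring_scope.

(* Cells are identified by their lower-left corner (i, j) : int * int. *)
Definition cell := (int * int)%type.

(* A construction sequence s = [:: s_1; ...; s_n]: s_j = 0 means elevation,
   s_j = k >= 1 means pasting a new column of k cells (1 <= k <= j-1).
   Validity: s_j <= j - 1 for every j (so step 1 is an elevation). *)
Definition valid_steps (s : seq nat) : bool :=
  all (fun i => (nth 0%N s i <= i)%N) (iota 0 (size s)).

(* A polyomino under construction is stored as its list of columns, leftmost
   first; a column is (bottom level, number of cells). *)
Definition deco_step (cols : seq (int * nat)) (k : nat) : seq (int * nat) :=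
  if k == 0%N then
    match cols with
    | [::] => [:: (0, 1%N)]
    | (b, h) :: r => (b - 1, h.+1) :: r
    end
  else
    match cols with
    | [::] => [:: (0, k)]
    | (b, h) :: r => (b, k) :: (b, h) :: r
    end.

Definition deco_columns (s : seq nat) : seq (int * nat) := foldl deco_step [::] s.

Definition cells_of_columns (cols : seq (int * nat)) : seq cell :=
  flatten [seq [seq ((Posz ic.1), ic.2.1 + Posz t) | t <- iota 0 ic.2.2]
          | ic <- zip (iota 0 (size cols)) cols].

Definition deco_cells (s : seq nat) : seq cell := cells_of_columns (deco_columns s).

Definition first_column_size (P : seq cell) : nat :=
  count (fun c : cell => all (fun d : cell => c.1 <= d.1) P) P.

(* permutations written as words pi_1 ... pi_n (entries 1..n) *)
Fixpoint phi4inv_aux (acc : seq nat) (s : seq nat) : seq nat :=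
  match s with
  | [::] => acc
  | k :: s' =>
      let n := size acc in
      let acc' := if k == 0%N then rcons acc n.+1
                  else take (n - k) acc ++ n.+1 :: drop (n - k) acc in
      phi4inv_aux acc' s'
  end.

Definition phi4inv (s : seq nat) : seq nat := phi4inv_aux [::] s.

Definition last_run_length (w : seq nat) : nat :=
  (size w - find (fun i => sorted ltn (drop i w)) (iota 0 (size w)))%N.

Definition lstep (p : int * int) (b : bool) : int * int :=
  if b then (p.1, p.2 + 1) else (p.1 + 1, p.2).

Definition path_points (o : int * int) (p : seq bool) : seq (int * int) :=
  o :: scanl lstep o p.

Definition path_end (o : int * int) (p : seq bool) : int * int := foldl lstep o p.

Definition east_step_at (o : int * int) (p : seq bool) (q : int * int) : bool :=
  has (fun i => ~~ nth true p i && (nth o (path_points o p) i == q))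
      (iota 0 (size p)).

Definition in_region (o : int * int) (u l : seq bool) (c : cell) : Prop :=
  exists yu yl : int,
    [/\ east_step_at o u (c.1, yu), east_step_at o l (c.1, yl) & yl <= c.2 < yu].

Definition is_parallelogram (P : seq cell) : Prop :=
  exists (o : int * int) (u l : seq bool),
    [/\ path_end o u = path_end o l,
        (forall q, q \in path_points o u -> q \in path_points o l ->
                   q = o \/ q = path_end o u)
      & forall c : cell, c \in P <-> in_region o u l c].

(* Main.v *)
Require Import Defs.
From mathcomp Require Import all_boot all_order all_algebra.
From mathcomp Require Import zify.
Import Order.TTheory GRing.Theory Num.Theory.
Set Implicit Arguments. Unset Strict Implicit. Unset Printing Implicit Defensive.

Module Aux.
Local Open Scope ring_scope.
Definition cf (k : nat) (cols : seq (int * nat)) : seq cell :=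
  flatten [seq [seq ((Posz ic.1), ic.2.1 + Posz t) | t <- iota 0 ic.2.2]
          | ic <- zip (iota k (size cols)) cols].

Lemma mem_col (k : nat) (b : int) (h : nat) (x y : int) :
  ((x, y) \in [seq ((Posz k), b + Posz t) | t <- iota 0 h]) = (x == Posz k) && (b <= y < b + Posz h).
Proof.
apply/mapP/andP => [[t]|[/eqP -> Hy]].
  rewrite mem_iota => /andP [_ Ht] [-> ->]; split => //.
  apply/andP; split; lia.
exists `|y - b|%N.
  rewrite mem_iota; apply/andP; split => //; lia.
congr pair; lia.
Qed.

Lemma mem_cf (cols : seq (int * nat)) (k : nat) (x y : int) :
  ((x, y) \in cf k cols) <->
  exists2 i, (i < size cols)%N &
     (x = Posz (k + i)) /\ ((nth (0, 0%N) cols i).1 <= y < (nth (0,0%N) cols i).1 + Posz (nth (0,0%N) cols i).2).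
Proof.
elim: cols k x => [|[b h] r IH] k x.
  by split => [//|[i]].
rewrite /cf /= mem_cat -/(cf k.+1 r) mem_col.
split.
  case/orP => [/andP [/eqP -> H]|].
    by exists 0%N => //; rewrite addn0.
  move=> /(proj1 (IH k.+1 x)) [i Hi] [-> H]; exists i.+1 => //; split => //; lia.
case => [[|i]] /= Hi [-> H].
  by rewrite addn0 eqxx H.
apply/orP; right; apply: (proj2 (IH k.+1 _)); exists i => //; split => //; lia.
Qed.
Lemma foldl_lstep_ge (r : seq bool) (q : int * int) :
  q.1 <= (foldl lstep q r).1 /\ q.2 <= (foldl lstep q r).2.
Proof.
elim: r q => [|b r IH] q /=; first by split.
have [H1 H2] := IH (lstep q b).
case: b H1 H2 => /= H1 H2; split; lia.
Qed.

Lemma pt_eq (o : int * int) (p : seq bool) (i : nat) : (i <= size p)%N ->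
  nth o (path_points o p) i = foldl lstep o (take i p).
Proof.
case: i => [|j] Hj /=; first by rewrite take0.
by rewrite nth_scanl.
Qed.

Lemma pt_mono (o : int * int) (p : seq bool) (i j : nat) : (i <= j)%N -> (j <= size p)%N ->
  (nth o (path_points o p) i).1 <= (nth o (path_points o p) j).1 /\
  (nth o (path_points o p) i).2 <= (nth o (path_points o p) j).2.
Proof.
move=> Hij Hj; rewrite !pt_eq //; last by apply: leq_trans Hj.
rewrite -(subnKC Hij) takeD foldl_cat; exact: foldl_lstep_ge.
Qed.

Lemma east_ex (o : int * int) (p : seq bool) (q : int * int) :
  east_step_at o p q -> exists2 a, (a < size p)%N & nth o (path_points o p) a = q.
Proof.
case/hasP => a; rewrite mem_iota add0n => /andP [_ Ha] /andP [_ /eqP Hq].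
by exists a.
Qed.

Lemma geo (P : seq cell) o u l (i : nat) (yt yb y : int) :
  (forall c : cell, c \in P <-> in_region o u l c) ->
  (Posz i, yt) \in P -> (Posz i.+1, yb) \in P -> yb <= y <= yt ->
  (Posz i.+1, y) \in P.
Proof.
move=> HP /HP [yu [yl [Hu _ Hyt]]] /HP [yu' [yl' [Hu' Hl' Hyb]]] Hy.
apply/HP; exists yu', yl'; split => //=.
have [a Ha Pa] := east_ex Hu.
have [b Hb Pb] := east_ex Hu'.
have Hab : (a <= b)%N.
  rewrite leqNgt; apply/negP => Hba.
  have [H1 _] := pt_mono o (ltnW Hba) (ltnW Ha).
  rewrite Pa Pb /= in H1; lia.
have [_ H2] := pt_mono o Hab (ltnW Hb).
rewrite Pa Pb /= in H2.
move: Hyt Hyb Hy H2 => /=; lia.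
Qed.
End Aux.
Import Aux.
Module Aux3.
Definition pstep (acc : seq nat) (k : nat) : seq nat :=
  let n := size acc in
  if k == 0%N then rcons acc n.+1
  else take (n - k) acc ++ n.+1 :: drop (n - k) acc.

Lemma phi_foldl acc s : phi4inv_aux acc s = foldl pstep acc s.
Proof. by elim: s acc => [|k s IH] acc //=; rewrite IH. Qed.

Definition RunOK (w : seq nat) (h : nat) : Prop :=
  [/\ 0 < h, h <= size w, sorted ltn (drop (size w - h) w)
    & h < size w -> nth 0 w (size w - h) < nth 0 w (size w - h).-1].

Lemma run_len w h : RunOK w h -> last_run_length w = h.
Proof.
case=> H0 Hh Hs Hd; rewrite /last_run_length.
set n := size w in Hh Hs Hd *; set m := (n - h)%N in Hs Hd *.
have Hmn : (m < n)%N by rewrite /m; lia.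
have -> : iota 0 n = iota 0 m ++ iota m (n - m) by rewrite -iotaD; congr iota; lia.
rewrite find_cat.
have -> : has (fun i => sorted ltn (drop i w)) (iota 0 m) = false.
  apply/negP => /hasP [j]; rewrite mem_iota add0n => /andP [_ Hj] Hsj.
  have Hm1 : (h < n)%N by rewrite /m in Hj; lia.
  have := drop_sorted (m.-1 - j) Hsj; rewrite drop_drop.
  have -> : (m.-1 - j + j = m.-1)%N by lia.
  rewrite (drop_nth 0) ?(drop_nth 0 (n := m.-1.+1)); try lia.
  have -> : m.-1.+1 = m by lia.
  move/Hd: Hm1 => /= Hlt /andP [H1 _]; lia.
have -> : (n - m = (n - m).-1.+1)%N by lia.
rewrite /= Hs size_iota addn0; lia.
Qed.

Lemma run_elev w h : RunOK w h -> all (fun x => x <= size w) w ->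
  RunOK (rcons w (size w).+1) h.+1.
Proof.
case=> H0 Hh Hs Hd Ha; rewrite /RunOK size_rcons; split => //.
  have -> : ((size w).+1 - h.+1 = size w - h)%N by lia.
  rewrite drop_rcons ?leq_subr //.
  move: Hs; case E: (drop (size w - h) w) => [|a t] //= Hs.
  rewrite rcons_path Hs /=.
  have : last a t \in w.
    have : last a t \in a :: t by rewrite mem_last.
    by rewrite -E => /mem_drop.
  by move/(allP Ha).
move=> Hlt.
have -> : ((size w).+1 - h.+1 = size w - h)%N by lia.
rewrite !nth_rcons.
have -> : (size w - h < size w)%N by lia.
have -> : ((size w - h).-1 < size w)%N by lia.
apply: Hd; lia.
Qed.

Lemma run_paste w h k : RunOK w h -> all (fun x => x <= size w) w -> (0 < k)%N -> (k <= h)%N ->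
  RunOK (take (size w - k) w ++ (size w).+1 :: drop (size w - k) w) k.
Proof.
case=> H0 Hh Hs Hd Ha Hk Hkh.
have Hst : size (take (size w - k) w) = (size w - k)%N by rewrite size_takel // leq_subr.
have Hsz : size (take (size w - k) w ++ (size w).+1 :: drop (size w - k) w) = (size w).+1.
  by rewrite size_cat /= size_drop Hst; lia.
rewrite /RunOK Hsz; split => //; first lia.
  rewrite drop_cat Hst.
  have -> : ((size w).+1 - k < size w - k)%N = false by lia.
  have -> : ((size w).+1 - k - (size w - k) = 1)%N by lia.
  rewrite /= drop0.
  have -> : (size w - k = (h - k) + (size w - h))%N by lia.
  by rewrite -drop_drop drop_sorted.
move=> _.
rewrite !nth_cat Hst.
have -> : ((size w).+1 - k < size w - k)%N = false by lia.
have -> : (((size w).+1 - k).-1 < size w - k)%N = false by lia.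
have -> : (((size w).+1 - k).-1 - (size w - k) = 0)%N by lia.
have -> : ((size w).+1 - k - (size w - k) = 1)%N by lia.
rewrite /= nth_drop addn0.
have : nth 0 w (size w - k) \in w. apply: mem_nth. change (size w - k < size w)%N; lia.
by move/(allP Ha).
Qed.

Lemma pstep_size w k : size (pstep w k) = (size w).+1.
Proof.
rewrite /pstep; case: eqP => _; first by rewrite size_rcons.
by rewrite size_cat /= size_take size_drop; case: ltnP; lia.
Qed.

Lemma pstep_all w k : all (fun x => x <= size w) w ->
  all (fun x => x <= (size w).+1) (pstep w k).
Proof.
move=> Ha; apply/allP => x; rewrite /pstep; case: eqP => _.
  rewrite mem_rcons inE => /orP [/eqP -> //|Hx].
  by have := allP Ha x Hx; lia.
rewrite mem_cat inE orbCA => /orP [/eqP -> //|].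
rewrite -mem_cat cat_take_drop => Hx.
by have := allP Ha x Hx; lia.
Qed.
End Aux3.
Import Aux3.
Module Aux4.
Local Open Scope ring_scope.
Definition tops (cols : seq (int * nat)) : seq int := [seq c.1 + Posz c.2 | c <- cols].
Definition tops_ok (cols : seq (int * nat)) : bool := sorted (fun a b : int => a <= b) (tops cols).

Lemma deco_cons cols k : exists b h r, deco_step cols k = (b, h) :: r.
Proof.
rewrite /deco_step; case: eqP => _; case: cols => [|[b h] r]; by do 3 eexists.
Qed.

Lemma heights_pos_aux acc s : all (fun c : int * nat => (0 < c.2)%N) acc ->
  all (fun c : int * nat => (0 < c.2)%N) (foldl deco_step acc s).
Proof.
elim: s acc => [|k s IH] acc //= Ha; apply: IH.
rewrite /deco_step; case: eqP => Hk; case: acc Ha => [|[b h] r] //= Ha.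
- by move/andP: Ha => [_ ->].
- by rewrite andbT lt0n; apply/eqP.
- by rewrite Ha andbT lt0n; apply/eqP.
Qed.

Lemma heights_pos s : all (fun c : int * nat => (0 < c.2)%N) (deco_columns s).
Proof. exact: heights_pos_aux. Qed.

Lemma tops_step b h r k : tops_ok (deco_step ((b, h) :: r) k) ->
  tops_ok ((b, h) :: r) /\ (k != 0%N -> (k <= h)%N).
Proof.
rewrite /deco_step; case: eqP => Hk.
  rewrite /tops_ok /tops /=.
  have -> : b - 1 + Posz h.+1 = b + Posz h by lia.
  by move=> ->; split => // /eqP.
rewrite /tops_ok /tops /= => /andP [H1 H2]; split => // _; lia.
Qed.

Lemma valid_rcons s k : valid_steps (rcons s k) -> valid_steps s /\ (k <= size s)%N.
Proof.
rewrite /valid_steps size_rcons -addn1 iotaD all_cat /= add0n nth_rcons ltnn eqxx andbT.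
move=> /andP [H1 H2]; split => //.
apply/allP => i Hi; have := allP H1 i Hi.
by rewrite mem_iota in Hi; rewrite nth_rcons (andP Hi).2.
Qed.

Lemma main_ind s : valid_steps s -> (0 < size s)%N -> tops_ok (deco_columns s) ->
  [/\ size (phi4inv s) = size s, all (fun x => (x <= size s)%N) (phi4inv s)
    & RunOK (phi4inv s) (head (0, 0%N) (deco_columns s)).2].
Proof.
elim/last_ind: s => [//|s k IH] /valid_rcons [Hv Hk] _.
rewrite /phi4inv /deco_columns !phi_foldl !foldl_rcons -!phi_foldl -/(phi4inv s) -/(deco_columns s).
case: s IH Hv Hk => [|x s'] IH Hv Hk.
  have -> : k = 0%N by move: Hk; rewrite /=; lia.
  by move=> _ /=; split => //; split.
have [b [h [r Hc]]] : exists b h r, deco_columns (x :: s') = (b, h) :: r.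
  have : (0 < size (x :: s'))%N by [].
  case/lastP: (x :: s') => [//|t y] _.
  by rewrite /deco_columns foldl_rcons; apply: deco_cons.
rewrite Hc => /tops_step [Htop Hkh].
have Htop' : tops_ok (deco_columns (x :: s')) by rewrite Hc.
have [Hsz Hall Hrun] := IH Hv isT Htop'.
rewrite Hc /= in Hrun.
rewrite -Hsz in Hall.
rewrite pstep_size size_rcons Hsz; split => //.
  by have := pstep_all k Hall; rewrite Hsz.
rewrite /pstep /deco_step; case: eqP => Hk0 /=.
  by apply: run_elev.
have Hk1 : (0 < k)%N by rewrite lt0n; apply/eqP.
by apply: (run_paste Hrun) => //; apply: Hkh; apply/eqP.
Qed.
Lemma para_tops s : is_parallelogram (deco_cells s) -> tops_ok (deco_columns s).
Proof.
case=> o [u [l [_ _ HP]]].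
have Hpos := heights_pos s.
rewrite /deco_cells in HP.
set cols := deco_columns s in HP Hpos *.
have Hmem : forall x y, (x, y) \in cells_of_columns cols <-> _ := fun x y => mem_cf cols 0 x y.
apply/(sortedP 0) => i; rewrite size_map => Hi.
rewrite /tops !(nth_map ((0:int), 0%N)) //; last by apply: ltnW.
have hi : (0 < (nth ((0:int), 0%N) cols i).2)%N by apply: (allP Hpos); apply: mem_nth; apply: ltnW.
have hj : (0 < (nth ((0:int), 0%N) cols i.+1).2)%N by apply: (allP Hpos); apply: mem_nth.
case Ei: (nth ((0:int), 0%N) cols i) hi => [bi hi] /= hi0.
case Ej: (nth ((0:int), 0%N) cols i.+1) hj => [bj hj] /= hj0.
rewrite leNgt; apply/negP => /= Hlt.
have H1 : (Posz i, bi + Posz hi - 1) \in cells_of_columns cols.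
  apply/Hmem; exists i; first by apply: ltnW.
  by rewrite Ei /=; split => //; apply/andP; split; lia.
have H2 : (Posz i.+1, bj) \in cells_of_columns cols.
  apply/Hmem; exists i.+1 => //; rewrite Ej /=; split => //; apply/andP; split; lia.
have := geo HP H1 H2 (y := bi + Posz hi - 1).
case/(_ _)/Hmem; first by apply/andP; split; lia.
move=> j Hj [Ej']; have Ej2 : j = i.+1 by lia.
rewrite Ej2 Ej /=; lia.
Qed.

Lemma first_col s : (0 < size s)%N ->
  first_column_size (deco_cells s) = (head ((0:int), 0%N) (deco_columns s)).2.
Proof.
move=> Hs.
have [b [h [r Hc]]] : exists b h r, deco_columns s = (b, h) :: r.
  move: Hs; case/lastP: s => [//|t y] _.
  by rewrite /deco_columns foldl_rcons; apply: deco_cons.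
have Hpos := heights_pos s; rewrite Hc /= in Hpos; move/andP: Hpos => [hpos _].
rewrite /first_column_size /deco_cells Hc /=.
have Hm : forall x y, (x, y) \in cells_of_columns ((b, h) :: r) <-> _ :=
  fun x y => mem_cf ((b, h) :: r) 0 x y.
change (cells_of_columns ((b, h) :: r)) with
  ([seq ((Posz 0), b + Posz t) | t <- iota 0 h] ++ cf 1 r).
rewrite count_cat.
set P := (_ ++ _).
have HP : forall c, c \in P -> (0 <= c.1).
  move=> [x y] /(proj1 (Hm x y)) [j _ [-> _]] //.
rewrite (@eq_in_count _ _ predT); last first.
  move=> [x y] Hxy /=.
  rewrite mem_col in Hxy; move/andP: Hxy => [/eqP -> _].
  by apply/allP => d /HP.
rewrite count_predT size_map size_iota.
rewrite (@eq_in_count _ _ pred0) ?count_pred0 ?addn0 //.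
move=> [x y] Hxy /=.
have Hx : 1 <= x.
  move: Hxy => /(proj1 (mem_cf r 1 x y)) [j _ [-> _]]; lia.
apply/negP => /allP /(_ (Posz 0, b)) /=.
have H : (Posz 0, b) \in P.
  rewrite mem_cat mem_col eqxx /=; apply/orP; left; apply/andP; split; lia.
move=> /(_ H); lia.
Qed.
End Aux4.
Import Aux4.

Theorem mainTheorem2 (s : seq nat) :
  (0 < size s)%N -> valid_steps s -> is_parallelogram (deco_cells s) ->
  first_column_size (deco_cells s) = last_run_length (phi4inv s).
Proof.
move=> Hs Hv Hp.
rewrite first_col //.
have [_ _ Hrun] := main_ind Hv Hs (para_tops Hp).
by rewrite (run_len Hrun).
Qed.
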